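(* Let $t \geq 1$ be an integer, let $\mathcal{A}_1, \dots, \mathcal{A}_k$ be cross-$t$-intersecting families of finite sets, and let $\mathcal{A} = \bigcup_{i=1}^k \mathcal{A}_i$. Then (i) $\mathcal{A}^{t,+} = \bigcup_{i=1}^k \mathcal{A}_i^{t,+}$; (ii) $\mathcal{A}^{t,-} = \bigcup_{i=1}^k \mathcal{A}_i^{t,-}$; (iii) $|\mathcal{A}^{t,-}| = \sum_{i=1}^k |\mathcal{A}_i^{t,-}|$.
   Context: Families $\mathcal{A}_1, \dots, \mathcal{A}_k$ (not necessarily distinct or non-empty) are cross-$t$-intersecting if for all $i \neq j$ in $\{1,\dots,k\}$, $|A \cap B| \geq t$ for every $A \in \mathcal{A}_i$ and $B \in \mathcal{A}_j$. For a family $\mathcal{B}$, $\mathcal{B}^{t,+} = \{B \in \mathcal{B} : |B \cap C| \geq t \text{ for all } C \in \mathcal{B} \text{ with } C \neq B\}$ and $\mathcal{B}^{t,-} = \mathcal{B} \setminus \mathcal{B}^{t,+}$. *)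

(* Defs.v *)
From mathcomp Require Import all_boot.
Set Implicit Arguments. Unset Strict Implicit. Unset Printing Implicit Defensive.

Definition tplus (T : finType) (t : nat) (F : {set {set T}}) : {set {set T}} :=
  [set B in F | [forall C in F, (C != B) ==> (t <= #|B :&: C|)]].

Definition tminus (T : finType) (t : nat) (F : {set {set T}}) : {set {set T}} :=
  F :\: tplus t F.

Definition cross_t_intersecting (T : finType) (t k : nat)
    (Fs : 'I_k -> {set {set T}}) : Prop :=
  forall i j : 'I_k, i != j ->
    forall A B : {set T}, A \in Fs i -> B \in Fs j -> t <= #|A :&: B|.

(* Main.v *)
Require Import Defs.
From mathcomp Require Import all_boot.

Theorem lemma2p1 (T : finType) (t k : nat) (Fs : 'I_k -> {set {set T}}) :
  1 <= t -> cross_t_intersecting t Fs ->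
  [/\ tplus t (\bigcup_(i < k) Fs i) = \bigcup_(i < k) tplus t (Fs i),
      tminus t (\bigcup_(i < k) Fs i) = \bigcup_(i < k) tminus t (Fs i) &
      #|tminus t (\bigcup_(i < k) Fs i)| = \sum_(i < k) #|tminus t (Fs i)| ].
Proof.
move=> _ Hc.
have Hp : tplus t (\bigcup_(i < k) Fs i) = \bigcup_(i < k) tplus t (Fs i).
  apply/setP=> B; apply/idP/idP.
    rewrite inE => /andP[/bigcupP[i _ Bi] /forall_inP H].
    apply/bigcupP; exists i => //; rewrite inE Bi /=.
    apply/forall_inP=> C Ci; apply: H; apply/bigcupP; by exists i.
  move=> /bigcupP[i _]; rewrite inE => /andP[Bi /forall_inP H].
  rewrite inE; apply/andP; split; first by apply/bigcupP; exists i.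
  apply/forall_inP=> C /bigcupP[j _ Cj]; apply/implyP=> nCB.
  case: (eqVneq i j) => [eij|nij]; first by subst j; move/implyP: (H C Cj); apply.
  exact: (Hc i j nij B C Bi Cj).
have Hm : tminus t (\bigcup_(i < k) Fs i) = \bigcup_(i < k) tminus t (Fs i).
  apply/setP=> B; rewrite /tminus Hp; apply/idP/idP.
    rewrite inE => /andP[nP /bigcupP[i _ Bi]].
    apply/bigcupP; exists i => //; rewrite inE Bi andbT.
    by apply: contra nP => BP; apply/bigcupP; exists i.
  move=> /bigcupP[i _]; rewrite inE => /andP[nP Bi].
  rewrite inE; apply/andP; split; last by apply/bigcupP; exists i.
  apply/negP => /bigcupP[j _]; rewrite inE => /andP[Bj /forall_inP H].
  case: (eqVneq i j) => [eij|nij].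
    by move: nP; rewrite eij inE Bj /=; move/forall_inP; apply.
  move: nP; rewrite inE Bi /=; move/negP; apply; apply/forall_inP=> C Ci.
  apply/implyP=> _; rewrite setIC; exact: (Hc i j nij C B Ci Bj).
split=> //; rewrite Hm.
rewrite -sum1_card partition_disjoint_bigcup.
  by apply: eq_bigr => i _; rewrite sum1_card.
move=> i j nij; rewrite disjoint_subset; apply/subsetP => B; rewrite !inE => Hi; apply/negP => Hj; move: Hi Hj.
move=> /andP[nPi Bi] /andP[nPj Bj].
move: nPi; rewrite Bi /=; move/negP; apply; apply/forall_inP=> C Ci.
apply/implyP=> _; rewrite setIC; exact: (Hc i j nij C B Ci Bj).
Qed.
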